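(* For $0<r_\varepsilon,r'_\varepsilon<1$ ($\varepsilon=+,-,0$) and $\mu_i,\mu'_i\in[0,2\pi)$ ($i=1,2,3$), let \begin{align*} U_{r,\mu}={}&|e_1^{-1}\rangle\langle r_0e_1^0+e^{i\mu_1}s_0e_2^0|+|e_2^{1}\rangle\langle -e^{i\mu_2}s_0e_1^0+e^{i(\mu_1+\mu_2)}r_0e_2^0|\\ &+\sum_{n\ge1}|e_1^{n-1}\rangle\langle r_+e_1^n+s_+e_2^n|+|e_2^{n+1}\rangle\langle -e^{i\mu_3}s_+e_1^n+e^{i\mu_3}r_+e_2^n|\\ &+\sum_{n\le-1}|e_1^{n-1}\rangle\langle r_-e_1^n+s_-e_2^n|+|e_2^{n+1}\rangle\langle -s_-e_1^n+r_-e_2^n|, \end{align*} with $s_\varepsilon=\sqrt{1-r_\varepsilon^2}$, where $r=(r_+,r_-,r_0)$, $\mu=(\mu_1,\mu_2,\mu_3)$, and define $U_{r',\mu'}$ analogously. Then $U_{r,\mu}$ and $U_{r',\mu'}$ are unitary equivalent if and only if $r=r'$ and $\mu=\mu'$.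
   Context: Let $\mathcal H_n=\mathbb C^2$ for $n\in\mathbb Z$, $\mathcal H=\bigoplus_{n\in\mathbb Z}\mathcal H_n$, and $\{e_1^n,e_2^n\}$ the standard basis of $\mathcal H_n$. Dirac notation: $|x\rangle\langle y|$ is the operator $z\mapsto\langle y,z\rangle x$ (inner product conjugate-linear in the first argument). Since a unitary $U$ and $e^{i\lambda}U$ are identified, unitaries $U_1,U_2$ on $\mathcal H$ are called unitary equivalent if there exist $\lambda\in\mathbb R$ and a unitary $W=\bigoplus_nW_n$ ($W_n$ unitary on $\mathcal H_n$) with $e^{i\lambda}WU_1W^*=U_2$. *)

(* Defs.v *)
From mathcomp Require Import all_boot all_algebra.
From mathcomp Require Import reals complex Rstruct.
From Stdlib Require Import Rdefinitions Rtrigo_def Rtrigo1 R_sqrt.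
Set Implicit Arguments. Unset Strict Implicit. Unset Printing Implicit Defensive.
Import GRing.Theory Num.Theory.
Local Open Scope ring_scope.

Notation RR := Rdefinitions.R.
Notation CC := (RR[i]).

Definition expi (x : RR) : CC := Complex (Rtrigo_def.cos x) (Rtrigo_def.sin x).

Definition sC (r : RR) : CC := Complex (R_sqrt.sqrt (1 - r ^+ 2)) 0.
Definition rC (r : RR) : CC := Complex r 0.

(* The Hilbert space H = (+)_{n in Z} C^2 with orthonormal basis e_a^n,
   n : int, a : 'I_2 (a = 0 stands for e_1, a = 1 for e_2).
   A vector of H_n is represented by its coordinate row vector in C^2. *)
Definition vec2 (x y : CC) : 'rV[CC]_2 := \row_(j < 2) (if j == 0 then x else y).

Section Umat.
Variables (r : RR * RR * RR) (mu : RR * RR * RR).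
Let rp := r.1.1. Let rm := r.1.2. Let r0 := r.2.
Let mu1 := mu.1.1. Let mu2 := mu.1.2. Let mu3 := mu.2.

(* bra vector y1(n) in H_n of the term |e_1^{n-1}><y1(n)| *)
Definition bra1 (n : int) : 'rV[CC]_2 :=
  if n == 0 then vec2 (rC r0) (expi mu1 * sC r0)
  else if 0 < n then vec2 (rC rp) (sC rp)
  else vec2 (rC rm) (sC rm).

(* bra vector y2(n) in H_n of the term |e_2^{n+1}><y2(n)| *)
Definition bra2 (n : int) : 'rV[CC]_2 :=
  if n == 0 then vec2 (- (expi mu2 * sC r0)) (expi (mu1 + mu2) * rC r0)
  else if 0 < n then vec2 (- (expi mu3 * sC rp)) (expi mu3 * rC rp)
  else vec2 (- sC rm) (rC rm).

(* Matrix entries <e_a^m, U_{r,mu} e_b^n> of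
   U_{r,mu} = sum_n |e_1^{n-1}><bra1 n| + |e_2^{n+1}><bra2 n|,
   with |x><y| z = <y,z> x and the inner product conjugate-linear in the
   first argument, so <y, e_b^n> = conj (y_b). *)
Definition Uent (m : int) (a : 'I_2) (n : int) (b : 'I_2) : CC :=
  (if (m == n - 1) && (a == 0) then conjc (bra1 n 0 b) else 0)
  + (if (m == n + 1) && (a == 1) then conjc (bra2 n 0 b) else 0).
End Umat.

Definition adj2 (A : 'M[CC]_2) : 'M[CC]_2 := (map_mx conjc A)^T.

Definition unitary2 (A : 'M[CC]_2) : Prop :=
  adj2 A *m A = 1%:M /\ A *m adj2 A = 1%:M.

(* Matrix entries <e_a^m, W U W^* e_b^n> for W = (+)_n W_n block diagonal,
   W_n acting on H_n by W_n e_d^n = sum_a (W_n a d) e_a^n. *)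
Definition conj_ent (W : int -> 'M[CC]_2)
  (U : int -> 'I_2 -> int -> 'I_2 -> CC) (m : int) (a : 'I_2) (n : int) (b : 'I_2) : CC :=
  \sum_(c < 2) \sum_(d < 2) W m a c * U m c n d * conjc (W n b d).

Definition unitary_equiv (U1 U2 : int -> 'I_2 -> int -> 'I_2 -> CC) : Prop :=
  exists (lam : RR) (W : int -> 'M[CC]_2),
    (forall n, unitary2 (W n)) /\
    (forall m a n b, expi lam * conj_ent W U1 m a n b = U2 m a n b).

(* Main.v *)
Require Import Defs.
From mathcomp Require Import all_boot all_order all_algebra.
From mathcomp Require Import reals complex Rstruct.
From Stdlib Require Import Reals Lra Lia.
From mathcomp Require Import ring zify.
Import Order.TTheory GRing.Theory Num.Theory.
Local Open Scope ring_scope.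

Lemma sum2 (F : 'I_2 -> CC) : \sum_(i < 2) F i = F 0 + F 1.
Proof. rewrite big_ord_recl big_ord1; congr (_ + F _); exact/val_inj. Qed.

Lemma vec2_0 (x y : CC) : vec2 x y 0 0 = x. Proof. by rewrite /vec2 mxE. Qed.
Lemma vec2_1 (x y : CC) : vec2 x y 0 1 = y. Proof. by rewrite /vec2 mxE. Qed.

Lemma conj_rC x : conjc (rC x) = rC x.
Proof. by rewrite /rC /= oppr0. Qed.
Lemma conj_sC x : conjc (sC x) = sC x.
Proof. by rewrite /sC /= oppr0. Qed.

Lemma expi_unit x : expi x * conjc (expi x) = 1.
Proof.
rewrite /expi /=; apply/eqP; rewrite eq_complex /=; apply/andP; split; apply/eqP.
  have := sin2_cos2 x; rewrite /Rsqr RplusE !RmultE => h.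
  by rewrite mulrN opprK addrC; exact h.
by rewrite mulrN mulrC addNr.
Qed.

Lemma rCM (x y : RR) : rC (x * y) = rC x * rC y.
Proof. by apply/eqP; rewrite eq_complex /= !mulr0 !mul0r subr0 addr0 !eqxx. Qed.

Lemma rC_inj : injective rC.
Proof. by move=> x y []. Qed.

Lemma rC_sq (x y : RR) : rC x * rC x = rC y * rC y -> x * x = y * y.
Proof.
move=> h.
by apply: rC_inj; rewrite !rCM.
Qed.

Lemma sq_pos_inj (x y : RR) : 0 < x -> 0 < y -> x * x = y * y -> x = y.
Proof.
move=> hx hy h.
have : (x - y) * (x + y) = 0 by rewrite mulrDr !mulrBl h; ring.
move/eqP; rewrite mulf_eq0 => /orP[/eqP h1|h2].
  by apply/eqP; rewrite -subr_eq0 h1.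
by have := ltr_wpDl (ltW hx) hy; rewrite (eqP h2) ltxx.
Qed.


Lemma trig_inj (a b : RR) : (0 <= a < 2 * PI)%R -> (0 <= b < 2 * PI)%R ->
  cos a = cos b -> sin a = sin b -> a = b.
Proof.
move=> [ha1 ha2] [hb1 hb2] hc hs.
have hsd : sin (a - b) = 0%R by rewrite sin_minus hc hs; lra.
have hcd : cos (a - b) = 1%R.
  rewrite cos_minus -hc -hs; have := sin2_cos2 a; rewrite /Rsqr. by rewrite Rplus_comm.
have [k hk] := sin_eq_0_0 _ hsd.
have PI0 := PI_RGT_0.
have h1 : (IZR k < 2)%R.
  apply: (Rmult_lt_reg_r PI) => //; rewrite -hk; lra.
have h2 : (-2 < IZR k)%R.
  apply: (Rmult_lt_reg_r PI) => //; rewrite -hk; lra.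
apply lt_IZR in h1; apply lt_IZR in h2.
have : (k = -1 \/ k = 0 \/ k = 1)%Z by lia.
case=> [ek|[ek|ek]]; rewrite ek in hk.
- move: hcd; rewrite hk; rewrite (_ : (IZR (-1) * PI = - PI)%R); last by simpl; lra.
  rewrite cos_neg cos_PI; lra.
- lra.
- move: hcd; rewrite hk Rmult_1_l cos_PI; lra.
Qed.

Lemma two_E : (2%R : RR) = 2.
Proof. by rewrite IZRposE INRE. Qed.

Lemma expi_inj (a b : RR) : 0 <= a < 2 * PI -> 0 <= b < 2 * PI -> expi a = expi b -> a = b.
Proof.
move=> /andP[/RleP ha1 /RltP ha2] /andP[/RleP hb1 /RltP hb2] [hc hs].
apply: trig_inj => //; rewrite two_E; split => //.
Qed.

Lemma Uent_up r mu (n : int) a b :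
  Uent r mu (n - 1) a n b = if a == 0 then conjc (bra1 r mu n 0 b) else 0.
Proof.
have h : (n - 1 == n + 1) = false by apply/eqP; lia.
by rewrite /Uent eqxx h /= addr0.
Qed.

Lemma Uent_dn r mu (n : int) a b :
  Uent r mu (n + 1) a n b = if a == 1 then conjc (bra2 r mu n 0 b) else 0.
Proof.
have h : (n + 1 == n - 1) = false by apply/eqP; lia.
by rewrite /Uent eqxx h /= add0r.
Qed.

Lemma ce_up W r mu (n : int) a b : conj_ent W (Uent r mu) (n - 1) a n b =
  W (n - 1) a 0 * (conjc (bra1 r mu n 0 0) * conjc (W n b 0) + conjc (bra1 r mu n 0 1) * conjc (W n b 1)).
Proof.
rewrite /conj_ent !sum2 !Uent_up /=; ring.
Qed.

Lemma ce_dn W r mu (n : int) a b : conj_ent W (Uent r mu) (n + 1) a n b =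
  W (n + 1) a 1 * (conjc (bra2 r mu n 0 0) * conjc (W n b 0) + conjc (bra2 r mu n 0 1) * conjc (W n b 1)).
Proof.
rewrite /conj_ent !sum2 !Uent_dn /=; ring.
Qed.

Lemma unit_ent V : unitary2 V ->
  (forall i j, \sum_(k < 2) conjc (V k i) * V k j = (i == j)%:R).
Proof.
move=> [h1 _] i j; move/matrixP: h1 => /(_ i j); rewrite !mxE => <-.
by apply: eq_bigr => k _; rewrite !mxE.
Qed.

Lemma kill (E w x0 x1 V00 V01 V10 V11 : CC) :
  E != 0 -> (x0 != 0) || (x1 != 0) ->
  conjc V00 * V00 + conjc V10 * V10 = 1 ->
  conjc V00 * V01 + conjc V10 * V11 = 0 ->
  conjc V01 * V00 + conjc V11 * V10 = 0 ->
  conjc V01 * V01 + conjc V11 * V11 = 1 ->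
  E * (w * (x0 * conjc V00 + x1 * conjc V01)) = 0 ->
  E * (w * (x0 * conjc V10 + x1 * conjc V11)) = 0 -> w = 0.
Proof.
move=> hE hx u00 u01 u10 u11 e0 e1.
apply/eqP; apply: contraT => hw.
have S0 : x0 * conjc V00 + x1 * conjc V01 = 0.
  by apply/eqP; move/eqP: e0; rewrite !mulf_eq0 (negbTE hE) (negbTE hw).
have S1 : x0 * conjc V10 + x1 * conjc V11 = 0.
  by apply/eqP; move/eqP: e1; rewrite !mulf_eq0 (negbTE hE) (negbTE hw).
have X0 : x0 = V00 * (x0 * conjc V00 + x1 * conjc V01) + V10 * (x0 * conjc V10 + x1 * conjc V11).
  transitivity (x0 * (conjc V00 * V00 + conjc V10 * V10) + x1 * (conjc V01 * V00 + conjc V11 * V10)).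
    by rewrite u00 u10; ring.
  ring.
have X1 : x1 = V01 * (x0 * conjc V00 + x1 * conjc V01) + V11 * (x0 * conjc V10 + x1 * conjc V11).
  transitivity (x0 * (conjc V00 * V01 + conjc V10 * V11) + x1 * (conjc V01 * V01 + conjc V11 * V11)).
    by rewrite u01 u11; ring.
  ring.
have z0 : x0 = 0 by rewrite X0 S0 S1 !mulr0 addr0.
have z1 : x1 = 0 by rewrite X1 S0 S1 !mulr0 addr0.
by move: hx; rewrite z0 z1 eqxx.
Qed.

Lemma expi_neq0 x : expi x != 0.
Proof. by apply/eqP => h; have := expi_unit x; rewrite h mul0r => /eqP; rewrite eq_sym oner_eq0. Qed.

Lemma rC_neq0 x : x != 0 -> rC x != 0.
Proof. by move=> hx; apply/eqP => -[] /eqP; rewrite (negbTE hx). Qed.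

Lemma bra1_pos rp rm r0 mu n : 0 < n -> bra1 (rp, rm, r0) mu n = vec2 (rC rp) (sC rp).
Proof. by move=> hn; rewrite /bra1 /= hn (gt_eqF hn). Qed.
Lemma bra1_neg rp rm r0 mu n : n < 0 -> bra1 (rp, rm, r0) mu n = vec2 (rC rm) (sC rm).
Proof. by move=> hn; rewrite /bra1 /= (lt_eqF hn) (lt_gtF hn). Qed.
Lemma bra1_0 rp rm r0 m1 m2 m3 : bra1 (rp, rm, r0) (m1, m2, m3) 0 = vec2 (rC r0) (expi m1 * sC r0).
Proof. by rewrite /bra1 /=. Qed.
Lemma bra2_pos rp rm r0 m1 m2 m3 n : 0 < n -> bra2 (rp, rm, r0) (m1, m2, m3) n = vec2 (- (expi m3 * sC rp)) (expi m3 * rC rp).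
Proof. by move=> hn; rewrite /bra2 /= hn (gt_eqF hn). Qed.
Lemma bra2_neg rp rm r0 mu n : n < 0 -> bra2 (rp, rm, r0) mu n = vec2 (- sC rm) (rC rm).
Proof. by move=> hn; rewrite /bra2 /= (lt_eqF hn) (lt_gtF hn). Qed.
Lemma bra2_0 rp rm r0 m1 m2 m3 : bra2 (rp, rm, r0) (m1, m2, m3) 0 = vec2 (- (expi m2 * sC r0)) (expi (m1 + m2) * rC r0).
Proof. by rewrite /bra2 /=. Qed.

Lemma bra1_nz rp rm r0 mu n : 0 < rp -> 0 < rm -> 0 < r0 -> conjc (bra1 (rp, rm, r0) mu n 0 0) != 0.
Proof.
move=> h1 h2 h3; case: mu => [[m1 m2] m3].
rewrite conjc_eq0; have [hn|hn|->] := ltrgtP n 0.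
- by rewrite bra1_neg // vec2_0 rC_neq0 // gt_eqF.
- by rewrite bra1_pos // vec2_0 rC_neq0 // gt_eqF.
- by rewrite bra1_0 vec2_0 rC_neq0 // gt_eqF.
Qed.

Lemma bra2_nz rp rm r0 mu n : 0 < rp -> 0 < rm -> 0 < r0 -> conjc (bra2 (rp, rm, r0) mu n 0 1) != 0.
Proof.
move=> h1 h2 h3; case: mu => [[m1 m2] m3].
rewrite conjc_eq0; have [hn|hn|->] := ltrgtP n 0.
- by rewrite bra2_neg // vec2_1 rC_neq0 // gt_eqF.
- by rewrite bra2_pos // vec2_1 mulf_neq0 ?expi_neq0 // rC_neq0 // gt_eqF.
- by rewrite bra2_0 vec2_1 mulf_neq0 ?expi_neq0 // rC_neq0 // gt_eqF.
Qed.

Lemma sC_neq0 x : 0 < x < 1 -> sC x != 0.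
Proof.
move=> /andP[h0 h1]; apply/eqP => -[]; rewrite RsqrtE => /eqP.
rewrite gt_eqF // sqrtr_gt0 subr_gt0 expr2.
by rewrite mulr_ilt1 // ltW.
Qed.

Lemma conjM (x y : CC) : conjc (x * y) = conjc x * conjc y. Proof. exact: rmorphM. Qed.
Lemma conjN (x : CC) : conjc (- x) = - conjc x. Proof. exact: rmorphN. Qed.
Lemma conj1C : conjc (1 : CC) = 1. Proof. exact: rmorph1. Qed.

Lemma cancelS (x y S : CC) : S != 0 -> x * S = y * S -> x = y.
Proof. by move=> hS; apply: mulIf. Qed.

Lemma mod_eq (E a b R R' : CC) : E * conjc E = 1 -> conjc a * a = 1 -> conjc b * b = 1 ->
  E * (a * (R * conjc b)) = R' -> conjc R = R -> conjc R' = R' -> R * R = R' * R'.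
Proof.
move=> hE ha hb h cR cR'.
have h2 := congr1 conjc h; rewrite !conjM conjcK cR cR' in h2.
rewrite -{1}h -{1}h2.
transitivity (R * R * ((E * conjc E) * (conjc a * a) * (conjc b * b))).
  by rewrite hE ha hb !mulr1.
ring.
Qed.

Lemma unitE (E u v S : CC) : S != 0 -> E * (u * (S * conjc v)) = S -> E * u * conjc v = 1.
Proof. by move=> hS h; apply: (mulIf hS); rewrite mul1r -{2}h; ring. Qed.

Lemma unitE' (E u v S : CC) : S != 0 -> E * (v * (- S * conjc u)) = - S -> E * v * conjc u = 1.
Proof. by move=> hS h; apply: (mulIf hS); rewrite mul1r; apply: oppr_inj; rewrite -h; ring. Qed.

Lemma conj1 (E u v : CC) : E * u * conjc v = 1 -> conjc E * conjc u * v = 1.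
Proof. by move=> h; have := congr1 conjc h; rewrite !conjM conjcK conj1C. Qed.

Lemma phase (E u v S1 S2 x x' : CC) : E * E = 1 -> E * conjc E = 1 -> S1 != 0 -> S2 != 0 ->
  E * (u * (S1 * conjc v)) = S1 -> E * (v * (- (x * S2) * conjc u)) = - (x' * S2) -> x' = x.
Proof.
move=> hE2 hE hS1 hS2 h1 h2.
have k := conj1 _ _ _ (unitE _ _ _ _ hS1 h1).
have e : x' = E * v * conjc u * x.
  by apply: (mulIf hS2); apply: oppr_inj; rewrite -h2; ring.
rewrite e; transitivity ((E * E) * (conjc E * conjc u * v) * x); last by rewrite hE2 k !mul1r.
transitivity ((E * conjc E) * E * v * conjc u * x); first by rewrite hE mul1r.
ring.
Qed.

Lemma phase2 (E u v S1 S2 x x' : CC) : E * E = 1 -> E * conjc E = 1 -> S1 != 0 -> S2 != 0 ->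
  E * (v * (- S2 * conjc u)) = - S2 -> E * (u * (x * S1 * conjc v)) = x' * S1 -> x' = x.
Proof.
move=> hE2 hE hS1 hS2 h1 h2.
have k := conj1 _ _ _ (unitE' _ _ _ _ hS2 h1).
have e : x' = E * u * conjc v * x.
  by apply: (mulIf hS1); rewrite -h2; ring.
rewrite e; transitivity ((E * E) * (conjc E * conjc v * u) * x); last by rewrite hE2 k !mul1r.
transitivity ((E * conjc E) * E * u * conjc v * x); first by rewrite hE mul1r.
ring.
Qed.

Lemma sq1 (E u v S : CC) : E * conjc E = 1 -> S != 0 ->
  E * (u * (S * conjc v)) = S -> E * (v * (- S * conjc u)) = - S -> E * E = 1.
Proof.
move=> hE hS h1 h2.
have k1 := unitE _ _ _ _ hS h1.
have k2 := conj1 _ _ _ (unitE' _ _ _ _ hS h2).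
transitivity (E * E * (conjc E * conjc v * u)); first by rewrite k2 mulr1.
transitivity ((E * conjc E) * (E * u * conjc v)); last by rewrite hE k1 mulr1.
ring.
Qed.

Lemma unit4 V : unitary2 V ->
  [/\ conjc (V 0 0) * V 0 0 + conjc (V 1 0) * V 1 0 = 1,
      conjc (V 0 0) * V 0 1 + conjc (V 1 0) * V 1 1 = 0,
      conjc (V 0 1) * V 0 0 + conjc (V 1 1) * V 1 0 = 0 &
      conjc (V 0 1) * V 0 1 + conjc (V 1 1) * V 1 1 = 1].
Proof.
move=> hV; have h := unit_ent _ hV.
split; [move: (h 0 0) | move: (h 0 1) | move: (h 1 0) | move: (h 1 1)]; by rewrite sum2.
Qed.

Lemma ord2 (a : 'I_2) : a = 0 \/ a = 1.
Proof. by case: a => [[|[|//]] h]; [left|right]; apply/val_inj. Qed.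

Lemma adj2_1 : adj2 1%:M = 1%:M.
Proof.
apply/matrixP => i j; rewrite !mxE eq_sym.
exact: conjc_nat.
Qed.

Lemma unitary_1 : unitary2 1%:M.
Proof. by rewrite /unitary2 adj2_1 mulmx1. Qed.

Lemma conj_ent_id U m a n b : conj_ent (fun _ => 1%:M) U m a n b = U m a n b.
Proof.
rewrite /conj_ent !sum2 !mxE.
by case: (ord2 a) => ->; case: (ord2 b) => ->; rewrite !conjc_nat /=; ring.
Qed.

Lemma expi0 : expi 0 = 1.
Proof. by rewrite /expi cos_0 sin_0. Qed.

Lemma Uent_up0 r mu (n : int) b : Uent r mu (n - 1) 0 n b = conjc (bra1 r mu n 0 b).
Proof. by rewrite Uent_up. Qed.
Lemma Uent_up1 r mu (n : int) b : Uent r mu (n - 1) 1 n b = 0.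
Proof. by rewrite Uent_up. Qed.
Lemma Uent_dn0 r mu (n : int) b : Uent r mu (n + 1) 0 n b = 0.
Proof. by rewrite Uent_dn. Qed.
Lemma Uent_dn1 r mu (n : int) b : Uent r mu (n + 1) 1 n b = conjc (bra2 r mu n 0 b).
Proof. by rewrite Uent_dn. Qed.

Theorem theorem2p8 (r r' mu mu' : RR * RR * RR) :
  (0 < r.1.1 < 1) -> (0 < r.1.2 < 1) -> (0 < r.2 < 1) ->
  (0 < r'.1.1 < 1) -> (0 < r'.1.2 < 1) -> (0 < r'.2 < 1) ->
  (0 <= mu.1.1 < 2 * PI) -> (0 <= mu.1.2 < 2 * PI) -> (0 <= mu.2 < 2 * PI) ->
  (0 <= mu'.1.1 < 2 * PI) -> (0 <= mu'.1.2 < 2 * PI) -> (0 <= mu'.2 < 2 * PI) ->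
  (unitary_equiv (Uent r mu) (Uent r' mu') <-> (r = r' /\ mu = mu')).
Proof.
case: r => [[rp rm] r0]; case: r' => [[rp' rm'] r0'].
case: mu => [[m1 m2] m3]; case: mu' => [[m1' m2'] m3'] /=.
move=> hp hm h0 hp' hm' h0' hm1 hm2 hm3 hm1' hm2' hm3'.
split; last first.
  case=> -> ->; exists 0, (fun _ => 1%:M); split => [n|m a n b]; first exact unitary_1.
  by rewrite expi0 mul1r conj_ent_id.
case=> lam [W [hU hE]].
have hEu : expi lam * conjc (expi lam) = 1 := expi_unit lam.
have hE0 : expi lam != 0 := expi_neq0 lam.
have W10 : forall m, W m 1 0 = 0.
  move=> m; rewrite -[m](addrK 1).
  have [u00 u01 u10 u11] := unit4 _ (hU (m+1)).
  apply: (kill (expi lam) _ (conjc (bra1 (rp, rm, r0) (m1, m2, m3) (m+1) 0 0))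
     (conjc (bra1 (rp, rm, r0) (m1, m2, m3) (m+1) 0 1)) _ _ _ _ hE0 _ u00 u01 u10 u11).
  - by rewrite bra1_nz //; [case/andP: hp|case/andP: hm|case/andP: h0].
  - by have := hE (m+1-1) 1 (m+1) 0; rewrite ce_up Uent_up1.
  - by have := hE (m+1-1) 1 (m+1) 1; rewrite ce_up Uent_up1.
have W01 : forall m, W m 0 1 = 0.
  move=> m; rewrite -[m](subrK 1).
  have [u00 u01 u10 u11] := unit4 _ (hU (m-1)).
  apply: (kill (expi lam) _ (conjc (bra2 (rp, rm, r0) (m1, m2, m3) (m-1) 0 0))
     (conjc (bra2 (rp, rm, r0) (m1, m2, m3) (m-1) 0 1)) _ _ _ _ hE0 _ u00 u01 u10 u11).
  - by rewrite bra2_nz ?orbT //; [case/andP: hp|case/andP: hm|case/andP: h0].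
  - by have := hE (m-1+1) 0 (m-1) 0; rewrite ce_dn Uent_dn0.
  - by have := hE (m-1+1) 0 (m-1) 1; rewrite ce_dn Uent_dn0.
have ha : forall n, conjc (W n 0 0) * W n 0 0 = 1.
  by move=> n; have [u00 _ _ _] := unit4 _ (hU n); rewrite W10 mulr0 addr0 in u00.
have hb : forall n, conjc (W n 1 1) * W n 1 1 = 1.
  by move=> n; have [_ _ _ u11] := unit4 _ (hU n); rewrite W01 mulr0 add0r in u11.
set R := (rp, rm, r0); set M := (m1, m2, m3); set R' := (rp', rm', r0'); set M' := (m1', m2', m3').
set E := expi lam.
have e1a : forall n, E * (W (n-1) 0 0 * (conjc (bra1 R M n 0 0) * conjc (W n 0 0))) = conjc (bra1 R' M' n 0 0).
  by move=> n; have := hE (n-1) 0 n 0; rewrite ce_up Uent_up0 W01 conjc0 mulr0 addr0.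
have e1b : forall n, E * (W (n-1) 0 0 * (conjc (bra1 R M n 0 1) * conjc (W n 1 1))) = conjc (bra1 R' M' n 0 1).
  by move=> n; have := hE (n-1) 0 n 1; rewrite ce_up Uent_up0 W10 conjc0 mulr0 add0r.
have e2a : forall n, E * (W (n+1) 1 1 * (conjc (bra2 R M n 0 0) * conjc (W n 0 0))) = conjc (bra2 R' M' n 0 0).
  by move=> n; have := hE (n+1) 1 n 0; rewrite ce_dn Uent_dn1 W01 conjc0 mulr0 addr0.
move: hp hm h0 hp' hm' h0' => /andP[hp1 hp2] /andP[hq1 hq2] /andP[h01 h02] /andP[hp1' hp2'] /andP[hq1' hq2'] /andP[h01' h02'].
have erp : rp = rp'.
  move: (e1a 1); rewrite subrr /R /R' !bra1_pos ?ltr01 // !vec2_0 !conj_rC => h.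
  apply: sq_pos_inj => //; apply: rC_sq.
  exact: (mod_eq _ _ _ _ _ hEu (ha 0) (ha 1) h (conj_rC _) (conj_rC _)).
have erm : rm = rm'.
  move: (e1a (-1)); rewrite /R /R' !bra1_neg ?ltrN10 // !vec2_0 !conj_rC => h.
  apply: sq_pos_inj => //; apply: rC_sq.
  exact: (mod_eq _ _ _ _ _ hEu (ha _) (ha _) h (conj_rC _) (conj_rC _)).
have er0 : r0 = r0'.
  move: (e1a 0); rewrite /R /R' !bra1_0 !vec2_0 !conj_rC => h.
  apply: sq_pos_inj => //; apply: rC_sq.
  exact: (mod_eq _ _ _ _ _ hEu (ha _) (ha _) h (conj_rC _) (conj_rC _)).
subst rp' rm' r0'.
have nzp : sC rp != 0 by apply: sC_neq0; rewrite hp1.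
have nzm : sC rm != 0 by apply: sC_neq0; rewrite hq1.
have nz0 : sC r0 != 0 by apply: sC_neq0; rewrite h01.
have E2 : E * E = 1.
  have h1 := e1b (-1); have h2 := e2a (-2).
  rewrite /R /R' /M /M' bra1_neg // bra1_neg // !vec2_1 !conj_sC in h1.
  rewrite /R /R' /M /M' bra2_neg // bra2_neg // !vec2_0 !conjN !conj_sC in h2.
  rewrite (_ : (-1 - 1 : int) = -2) // in h1.
  rewrite (_ : (-2 + 1 : int) = -1) // in h2.
  exact: (sq1 _ _ _ _ hEu nzm h1 h2).
have cinj : forall x y, conjc (expi x) = conjc (expi y) -> expi x = expi y.
  by move=> x y h; rewrite -[expi x]conjcK h conjcK.
have e3 : m3' = m3.
  have h1 := e1b 2; have h2 := e2a 1.
  rewrite /R /R' /M /M' bra1_pos // bra1_pos // !vec2_1 !conj_sC in h1.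
  rewrite /R /R' /M /M' bra2_pos // bra2_pos // !vec2_0 !conjN !conjM !conj_sC in h2.
  rewrite (_ : (2 - 1 : int) = 1) // in h1.
  rewrite (_ : (1 + 1 : int) = 2) // in h2.
  apply: expi_inj => //; apply: cinj.
  exact: (phase _ _ _ _ _ _ _ E2 hEu nzp nzp h1 h2).
have e2 : m2' = m2.
  have h1 := e1b 1; have h2 := e2a 0.
  rewrite /R /R' /M /M' bra1_pos // bra1_pos // !vec2_1 !conj_sC subrr in h1.
  rewrite /R /R' /M /M' bra2_0 bra2_0 !vec2_0 !conjN !conjM !conj_sC add0r in h2.
  apply: expi_inj => //; apply: cinj.
  exact: (phase _ _ _ _ _ _ _ E2 hEu nzp nz0 h1 h2).
have e1 : m1' = m1.
  have h1 := e2a (-1); have h2 := e1b 0.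
  rewrite /R /R' /M /M' bra2_neg // bra2_neg // !vec2_0 !conjN !conj_sC in h1.
  rewrite /R /R' /M /M' bra1_0 bra1_0 !vec2_1 !conjM !conj_sC sub0r in h2.
  rewrite (_ : (-1 + 1 : int) = 0) // in h1.
  apply: expi_inj => //; apply: cinj.
  exact: (phase2 _ _ _ _ _ _ _ E2 hEu nz0 nzm h1 h2).
by rewrite /R /R' /M /M' e1 e2 e3.
Qed.
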